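(* Let $(\mathbf{S},\leq,\land,\mid,\mathsf{U})$ be a specification theory as described in the context, and assume moreover that parallel composition is idempotent in the sense that $A\leq A\mid A$ for all $A\in\mathbf{S}$. Then for all $A,B,C\in\mathbf{S}$ we have $(A\mid B)\mid C\leq A\mid(B\mid C)$, and consequently also $A\mid(B\mid C)\leq(A\mid B)\mid C$.
   Context: A specification theory consists of a set $\mathbf{S}$ (the specifications) with: a binary relation $\leq\ \subseteq \mathbf{S}\times\mathbf{S}$ (refinement) which is a preorder (reflexive and transitive); a universal specification $\mathsf{U}\in\mathbf{S}$ with $A\leq\mathsf{U}$ for all $A\in\mathbf{S}$; a total binary operation $\land:\mathbf{S}\times\mathbf{S}\to\mathbf{S}$ (conjunction) such that for all $A,B,C\in\mathbf{S}$: $A\land B\leq B\land A$, $A\land B\leq A$, $A\land B\leq B$, and if $C\leq A$ and $C\leq B$ then $C\leq A\land B$ (i.e. $\land$ is a greatest lower bound); a total binary operation $\mid:\mathbf{S}\times\mathbf{S}\to\mathbf{S}$ (parallel composition) such that for all $A,B,C\in\mathbf{S}$: $A\mid B\leq B\mid A$ (commutativity), and $A\leq B$ implies $A\mid C\leq B\mid C$ (precongruence); and moreover $A\mid\mathsf{U}\leq A$ for all $A\in\mathbf{S}$. *)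

(* Defs.v *)
Set Implicit Arguments.

Record SpecTheory := {
  spec :> Type;
  refines : spec -> spec -> Prop;
  U : spec;
  conj : spec -> spec -> spec;
  par : spec -> spec -> spec;
  refines_refl : forall A, refines A A;
  refines_trans : forall A B C, refines A B -> refines B C -> refines A C;
  refines_U : forall A, refines A U;
  conj_comm : forall A B, refines (conj A B) (conj B A);
  conj_lb1 : forall A B, refines (conj A B) A;
  conj_lb2 : forall A B, refines (conj A B) B;
  conj_glb : forall A B C, refines C A -> refines C B -> refines C (conj A B);
  par_comm : forall A B, refines (par A B) (par B A);
  par_mono : forall A B C, refines A B -> refines (par A C) (par B C);
  par_U : forall A, refines (par A U) A
}.

(* Main.v *)
Require Import Defs.

Section S.
Variable T : SpecTheory.
Local Notation "a <== b" := (refines T a b) (at level 70).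
Local Notation "a || b" := (par T a b).
Hypothesis idem : forall A : T, A <== A || A.

Lemma tr (A B C : T) : A <== B -> B <== C -> A <== C.
Proof. apply refines_trans. Qed.

Lemma mono_r (A B B' : T) : B <== B' -> A || B <== A || B'.
Proof.
  intro H. eapply tr. apply par_comm. eapply tr. apply par_mono, H. apply par_comm.
Qed.

Lemma lb1 (A B : T) : A || B <== A.
Proof. eapply tr. apply mono_r, refines_U. apply par_U. Qed.

Lemma lb2 (A B : T) : A || B <== B.
Proof. eapply tr. apply par_comm. apply lb1. Qed.

Lemma glb (A B X : T) : X <== A -> X <== B -> X <== A || B.
Proof.
  intros H1 H2. eapply tr. apply idem. eapply tr. apply par_mono, H1. apply mono_r, H2.
Qed.
End S.

Theorem theorem6 (T : SpecTheory)
  (idem : forall A : T, refines T A (par T A A)) :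
  forall A B C : T,
    refines T (par T (par T A B) C) (par T A (par T B C)) /\
    refines T (par T A (par T B C)) (par T (par T A B) C).
Proof.
  intros A B C. split.
  - apply glb; [exact idem| |].
    + eapply tr; [apply lb1|apply lb1].
    + apply glb; [exact idem| |].
      * eapply tr; [apply lb1|apply lb2].
      * apply lb2.
  - apply glb; [exact idem| |].
    + apply glb; [exact idem| |].
      * apply lb1.
      * eapply tr; [apply lb2|apply lb1].
    + eapply tr; [apply lb2|apply lb2].
Qed.
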